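(* Let $(H,v)$ be a rooted graph. Then for any integers $k\ge 0$ and $g\ge 1$, \[ X_{P^k(K_g,\,H)}=(g-1)!\sum_{l=0}^{g-1}(1-l)\,e_l\,X_{H^{k+g-1-l}}. \]
   Context: All graphs are finite simple graphs. The chromatic symmetric function of a graph $G$ is $X_G=\sum_{\kappa}\prod_{v\in V(G)}x_{\kappa(v)}$, where $\kappa$ ranges over proper colorings $\kappa:V(G)\to\{1,2,\dots\}$. $e_l$ is the $l$-th elementary symmetric function, $e_0=1$. $K_g$ is the complete graph on $g$ vertices, rooted at any vertex. For rooted graphs $(G,u)$, $(H,v)$ and $k\ge 0$, $P^k(G,H)$ is obtained from the disjoint union of $G$ and $H$ by adding a path of length $k$ (with $k-1$ new internal vertices) joining $u$ and $v$ (for $k=0$, $u$ and $v$ are identified). The tailed graph $H^k$ is $P^k(H,K_1)$, i.e., $H$ with a pendant path of length $k$ attached at its root. *)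

(* Defs.v *)
From HB Require Import structures.
From mathcomp Require Import all_boot all_order all_algebra.
From mathcomp Require Import mpoly.
Set Implicit Arguments. Unset Strict Implicit. Unset Printing Implicit Defensive.
Import GRing.Theory.
Local Open Scope ring_scope.

Record simple_graph := SGraph {
  vtx : finType;
  adj : rel vtx;
  adj_sym : ssrbool.symmetric adj;
  adj_irr : irreflexive adj }.

Record rooted_graph := RGraph { rg :> simple_graph; root : vtx rg }.

Definition simplify (T : finType) (e : rel T) : rel T :=
  fun a b => (a != b) && (e a b || e b a).

Lemma simplify_sym (T : finType) (e : rel T) : ssrbool.symmetric (simplify e).
Proof. by move=> a b; rewrite /simplify eq_sym orbC. Qed.

Lemma simplify_irr (T : finType) (e : rel T) : irreflexive (simplify e).
Proof. by move=> a; rewrite /simplify eqxx. Qed.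

Definition mk_sgraph (T : finType) (e : rel T) : simple_graph :=
  SGraph (@simplify_sym T e) (@simplify_irr T e).

Definition complete_rgraph (g : nat) (hg : (0 < g)%N) : rooted_graph :=
  @RGraph (mk_sgraph (fun x y : 'I_g => x != y)) (Ordinal hg).

(* P^k(G,H): disjoint union of G and H, joined by a path of length k from
   the root u of G to the root v of H (for k = 0, u and v are identified).
   Vertices: G  +  internal/terminal path vertices w_1..w_k (w_i encoded by
   i-1 : 'I_k)  +  (H minus v).  The vertex v of H is represented by w_k if
   k >= 1 and by u if k = 0. *)
Section PathJoin.
Variables (G H : rooted_graph) (k : nat).

Definition pj_vtx : finType :=
  ((vtx G + 'I_k) + {x : vtx H | x != root H})%type.

Definition pj_v : pj_vtx :=
  match [pick i : 'I_k | i.+1 == k] with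
  | Some i => inl (inr i)
  | None => inl (inl (root G))
  end.

Definition pj_H (x : vtx H) : pj_vtx :=
  match insub x with
  | Some y => inr y
  | None => pj_v
  end.

Definition pj_base (a b : pj_vtx) : bool :=
  match a, b with
  | inl (inl x), inl (inl y) => adj x y
  | inl (inl x), inl (inr i) => (x == root G) && (nat_of_ord i == 0)%N
  | inl (inr i), inl (inr j) => (nat_of_ord j == (nat_of_ord i).+1)%N
  | _, _ => false
  end
  || [exists x : vtx H, exists y : vtx H,
        [&& adj x y, a == pj_H x & b == pj_H y]].

Definition path_join : simple_graph := mk_sgraph pj_base.
End PathJoin.

(* K_1 rooted at its unique vertex, and the tailed graph H^k = P^k(H, K_1). *)
Definition K1 : rooted_graph := complete_rgraph (ltn0Sn 0).
Definition tailed (H : rooted_graph) (k : nat) : simple_graph := path_join H K1 k.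

Definition proper_col (G : simple_graph) (n : nat) (c : {ffun vtx G -> 'I_n}) : bool :=
  [forall x, forall y, adj x y ==> (c x != c y)].

(* The chromatic symmetric function X_G specialised to n variables
   x_0, ..., x_{n-1} (all other variables set to 0), with integer
   coefficients. *)
Definition chromsym (n : nat) (G : simple_graph) : {mpoly int[n]} :=
  \sum_(c : {ffun vtx G -> 'I_n} | proper_col c) \prod_(v : vtx G) 'X_(c v).

(* Main.v *)
Require Import Defs.
From mathcomp Require Import all_boot all_order all_algebra.
From mathcomp Require Import mpoly.
From mathcomp Require Import ring.
Import GRing.Theory.
Local Open Scope ring_scope.
Set Implicit Arguments. Unset Strict Implicit. Unset Printing Implicit Defensive.


Section Split.
Variable R : comNzRingType.

Definition fjoin (A B T : finType) (fa : {ffun A -> T}) (fb : {ffun B -> T}) : {ffun A + B -> T} :=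
  [ffun x => match x with inl a => fa a | inr b => fb b end].

Lemma sum_ffun_sum (A B T : finType) (F : {ffun A + B -> T} -> R) :
  \sum_(f : {ffun A + B -> T}) F f =
  \sum_(fa : {ffun A -> T}) \sum_(fb : {ffun B -> T}) F (fjoin fa fb).
Proof.
rewrite pair_bigA /=.
rewrite (reindex (fun p : {ffun A -> T} * {ffun B -> T} => fjoin p.1 p.2)) //=.
exists (fun f : {ffun A + B -> T} => ([ffun a => f (inl a)], [ffun b => f (inr b)])).
  by move=> [fa fb] _ /=; congr pair; apply/ffunP => x; rewrite !ffunE.
by move=> f _; apply/ffunP => -[a|b]; rewrite /= !ffunE.
Qed.

Definition fcons (m : nat) (T : finType) (t : T) (f : {ffun 'I_m -> T}) : {ffun 'I_m.+1 -> T} :=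
  [ffun i => match unlift ord0 i with Some j => f j | None => t end].

Lemma fcons0 m T t f : @fcons m T t f ord0 = t.
Proof. by rewrite ffunE unlift_none. Qed.

Lemma fconsS m T t f j : @fcons m T t f (lift ord0 j) = f j.
Proof. by rewrite ffunE liftK. Qed.

Lemma sum_ffun_cons (m : nat) (T : finType) (F : {ffun 'I_m.+1 -> T} -> R) :
  \sum_(f : {ffun 'I_m.+1 -> T}) F f =
  \sum_(t : T) \sum_(f : {ffun 'I_m -> T}) F (fcons t f).
Proof.
rewrite pair_bigA /=.
rewrite (reindex (fun p : T * {ffun 'I_m -> T} => fcons p.1 p.2)) //=.
exists (fun f : {ffun 'I_m.+1 -> T} => (f ord0, [ffun j => f (lift ord0 j)])).
  move=> [t f] _ /=; congr pair; first by rewrite fcons0.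
  by apply/ffunP => x; rewrite ffunE fconsS.
move=> f _; apply/ffunP => i /=; rewrite ffunE.
by case: unliftP => [j ->|->]; rewrite ?ffunE.
Qed.
End Split.


Section Path.
Variable R : comNzRingType.
Variable n : nat.
Variable X : 'I_n -> R.

Definition pathOK (m : nat) (c : 'I_n) (k : {ffun 'I_m -> 'I_n}) : bool :=
  [forall i : 'I_m, ((nat_of_ord i == 0)%N ==> (k i != c)) &&
     [forall j : 'I_m, (nat_of_ord j == (nat_of_ord i).+1)%N ==> (k i != k j)]].

Definition plast (m : nat) (c : 'I_n) (k : {ffun 'I_m -> 'I_n}) : 'I_n :=
  match [pick i : 'I_m | i.+1 == m] with Some i => k i | None => c end.

Lemma pathOK_cons m c t (f : {ffun 'I_m -> 'I_n}) :
  pathOK c (fcons t f) = (t != c) && pathOK t f.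
Proof.
apply/idP/idP.
  move/forallP => H; apply/andP; split.
    by move: (H ord0); rewrite fcons0 /= => /andP[].
  apply/forallP => i; apply/andP; split.
    apply/implyP => i0; move: (H ord0) => /andP[_ /forallP/(_ (lift ord0 i))].
    by rewrite lift0 (eqP i0) /= fcons0 fconsS eq_sym.
  apply/forallP => j; apply/implyP => ji.
  move: (H (lift ord0 i)) => /andP[_ /forallP/(_ (lift ord0 j))].
  by rewrite !lift0 (eqP ji) eqxx !fconsS.
move=> /andP[tc /forallP H]; apply/forallP => i.
case: (unliftP ord0 i) => [i' ->|->].
  rewrite lift0 /=; apply/forallP => j.
  case: (unliftP ord0 j) => [j' ->|->]; last by [].
  rewrite !lift0 eqSS !fconsS; apply/implyP => ji.
  by move: (H i') => /andP[_ /forallP/(_ j')]; rewrite ji.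
rewrite fcons0 tc /=; apply/forallP => j.
case: (unliftP ord0 j) => [j' ->|->]; last by [].
rewrite lift0 eqSS fconsS; apply/implyP => j0.
by move: (H j') => /andP[]; rewrite j0 /= eq_sym.
Qed.

Lemma plast0 c (k : {ffun 'I_0 -> 'I_n}) : plast c k = c.
Proof. by rewrite /plast; case: pickP => // -[]. Qed.

Lemma plastS m c (k : {ffun 'I_m.+1 -> 'I_n}) : plast c k = k ord_max.
Proof.
rewrite /plast; case: pickP => [i /eqP Hi | H].
  by congr (k _); apply/val_inj => /=; case: Hi.
by move: (H ord_max); rewrite /= eqxx.
Qed.

Lemma plast_cons m c t (f : {ffun 'I_m -> 'I_n}) : plast c (fcons t f) = plast t f.
Proof.
rewrite plastS; case: m f => [|m] f.
  by rewrite plast0 (_ : ord_max = ord0) ?fcons0 //; apply/val_inj.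
by rewrite plastS (_ : ord_max = lift ord0 ord_max) ?fconsS //; apply/val_inj.
Qed.

Definition Wsum (m : nat) (f : 'I_n -> R) (c : 'I_n) : R :=
  \sum_(k : {ffun 'I_m -> 'I_n} | pathOK c k) (\prod_(i < m) X (k i)) * f (plast c k).

Lemma W_S m f c : Wsum m.+1 f c = \sum_(d | d != c) X d * Wsum m f d.
Proof.
rewrite /Wsum big_mkcond sum_ffun_cons [RHS]big_mkcond; apply: eq_bigr => t _.
rewrite (eq_bigr (fun g => if (t != c) && pathOK t g then
   \prod_(i < m.+1) X (fcons t g i) * f (plast c (fcons t g)) else 0)); last first.
  by move=> g _; rewrite pathOK_cons.
case: (t != c) => /=; last by rewrite big1.
rewrite big_distrr [RHS]big_mkcond; apply: eq_bigr => g _.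
case: (pathOK t g) => //=.
rewrite big_ord_recl fcons0 plast_cons mulrA; congr (_ * _ * _).
by apply: eq_bigr => i _; rewrite fconsS.
Qed.

Lemma W_0 f c : Wsum 0 f c = f c.
Proof.
rewrite /Wsum (big_pred1 [ffun i => c]).
  by rewrite big_ord0 mul1r plast0.
move=> k; apply/idP/idP.
  by move=> _; apply/eqP/ffunP => -[].
by move=> _; apply/forallP => -[].
Qed.
End Path.


Section Decomp.
Variable R : comNzRingType.
Variable n : nat.
Variable X : 'I_n -> R.

Definition properf (G : simple_graph) (k : vtx G -> 'I_n) : bool :=
  [forall x, forall y, adj x y ==> (k x != k y)].

Definition ext (H : rooted_graph) (r : {ffun {x : vtx H | x != Defs.root H} -> 'I_n})
  (d : 'I_n) (x : vtx H) : 'I_n :=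
  match (insub x : option {x : vtx H | x != Defs.root H}) with Some y => r y | None => d end.

Definition Bsum (H : rooted_graph) (d : 'I_n) : R :=
  \sum_(r : {ffun {x : vtx H | x != Defs.root H} -> 'I_n} | properf (ext r d))
     \prod_y X (r y).

Definition csum (G : simple_graph) : R :=
  \sum_(c : {ffun vtx G -> 'I_n} | proper_col c) \prod_v X (c v).

Lemma properE (T : finType) (e : rel T) (c : T -> 'I_n) :
  reflect (forall a b, e a b -> a != b -> c a != c b)
          [forall x, forall y, simplify e x y ==> (c x != c y)].
Proof.
apply: (iffP forallP) => [H a b eab nab | H x].
  by move: (H a) => /forallP /(_ b) /implyP; apply; rewrite /simplify nab eab.
apply/forallP => y; apply/implyP; rewrite /simplify => /andP[nxy /orP[e1|e1]].
  exact: H.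
by rewrite eq_sym; apply: H e1 _; rewrite eq_sym.
Qed.

Variables (G H : rooted_graph) (m : nat).

Lemma pj_H_val (k : {ffun vtx G -> 'I_n}) (kP : {ffun 'I_m -> 'I_n})
   (r : {ffun {x : vtx H | x != Defs.root H} -> 'I_n}) x :
  (fjoin (fjoin k kP) r : {ffun pj_vtx G H m -> 'I_n}) (pj_H G m x)
   = ext r (plast (k (Defs.root G)) kP) x.
Proof.
rewrite /pj_H /ext; case: insubP => [y _ _ | _]; rewrite ?ffunE //.
by rewrite /pj_v /plast; case: pickP => [i _|_]; rewrite !ffunE.
Qed.

Lemma pj_H_inj : injective (@pj_H G H m).
Proof.
move=> x y; rewrite /pj_H /pj_v.
case: insubP => [x' _ ex|/negPn/eqP ->]; case: insubP => [y' _ ey|/negPn/eqP ->] //.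
- by case=> e; rewrite -ex -ey e.
- by case: pickP.
- by case: pickP.
Qed.


Lemma proper_join (k : {ffun vtx G -> 'I_n}) (kP : {ffun 'I_m -> 'I_n})
   (r : {ffun {x : vtx H | x != Defs.root H} -> 'I_n}) :
  proper_col (fjoin (fjoin k kP) r : {ffun vtx (path_join G H m) -> 'I_n}) =
  [&& proper_col k, pathOK (k (Defs.root G)) kP &
      properf (ext r (plast (k (Defs.root G)) kP))].
Proof.
set f := (fjoin (fjoin k kP) r : {ffun vtx (path_join G H m) -> 'I_n}).
apply/idP/idP.
  move/properE => P; apply/and3P; split.
  - apply/forallP => x; apply/forallP => y; apply/implyP => exy.
    have := P (inl (inl x)) (inl (inl y)).
    rewrite /pj_base /= exy /f !ffunE; apply => //.
    by apply: (contraTneq _ exy) => -[->]; rewrite adj_irr.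
  - apply/forallP => i; apply/andP; split.
      apply/implyP => i0; have := P (inl (inl (Defs.root G))) (inl (inr i)).
      by rewrite /pj_base /= eqxx i0 /f !ffunE eq_sym; apply.
    apply/forallP => j; apply/implyP => ji.
    have := P (inl (inr i)) (inl (inr j)).
    rewrite /pj_base /= ji /f !ffunE; apply => //.
    by apply/negP => /eqP [] eij; move: ji; rewrite eij eqn_leq ltnn andbF.
  - rewrite /properf; apply/forallP => x; apply/forallP => y; apply/implyP => exy.
    rewrite -!pj_H_val; apply: P.
      apply/orP; right; apply/existsP; exists x; apply/existsP; exists y.
      by rewrite exy !eqxx.
    by apply: (contraTneq _ exy) => /pj_H_inj ->; rewrite adj_irr.
move/and3P => [pG pP pH]; rewrite /properf in pH; apply/properE => a b.
rewrite /pj_base => /orP [Hb | /existsP [x /existsP [y /and3P [exy /eqP -> /eqP ->]]]] nab;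
  last by rewrite /f !pj_H_val; move: pH => /forallP/(_ x)/forallP/(_ y)/implyP; apply.
move: a b Hb nab => [[x|i]|u] [[y|j]|w] //= Hb nab; rewrite /f !ffunE.
- by move: pG => /forallP/(_ x)/forallP/(_ y)/implyP; apply.
- move/andP: Hb => [/eqP -> j0].
  by move: pP => /forallP/(_ j)/andP[/implyP/(_ j0)]; rewrite eq_sym.
- by move: pP => /forallP/(_ i)/andP[_ /forallP/(_ j)/implyP/(_ Hb)].
Qed.


Lemma decomp : csum (path_join G H m) =
  \sum_(k : {ffun vtx G -> 'I_n} | proper_col k)
     (\prod_x X (k x)) * Wsum X m (Bsum H) (k (Defs.root G)).
Proof.
rewrite /csum big_mkcond /=.
rewrite (@sum_ffun_sum R (vtx G + 'I_m)%type {x : vtx H | x != Defs.root H} 'I_n).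
rewrite (@sum_ffun_sum R (vtx G) 'I_m).
rewrite [RHS]big_mkcond; apply: eq_bigr => k _.
transitivity (\sum_(kP : {ffun 'I_m -> 'I_n}) \sum_(r : {ffun {x : vtx H | x != Defs.root H} -> 'I_n})
   if [&& proper_col k, pathOK (k (Defs.root G)) kP &
      properf (ext r (plast (k (Defs.root G)) kP))]
   then (\prod_x X (k x) * \prod_i X (kP i)) * \prod_y X (r y) else 0).
  apply: eq_bigr => kP _; apply: eq_bigr => r _; rewrite proper_join.
  case: ifP => // _.
  rewrite (@big_sumType _ _ _ (vtx G + 'I_m)%type {x : vtx H | x != Defs.root H}).
  rewrite (@big_sumType _ _ _ (vtx G) 'I_m).
  by rewrite /=; congr (_ * _ * _); apply: eq_bigr => i _; rewrite !ffunE.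
case: (proper_col k) => /=; last by rewrite big1 // => kP _; rewrite big1.
rewrite /Wsum big_distrr [RHS]big_mkcond /=; apply: eq_bigr => kP _.
case: (pathOK _ kP) => /=; last by rewrite big1.
rewrite /Bsum !big_distrr [RHS]big_mkcond /=; apply: eq_bigr => r _.
by case: (properf _) => //=; rewrite mulrA.
Qed.

End Decomp.


Section Root.
Variable R : comNzRingType.
Variable n : nat.
Variable X : 'I_n -> R.

Lemma Bsum_K1 d : Bsum X K1 d = 1.
Proof.
have E : forall y : {x : vtx K1 | x != Defs.root K1}, False.
  by case=> x; rewrite (ord1 x) (_ : Defs.root K1 = ord0) ?eqxx //; apply/val_inj.
rewrite /Bsum (eq_bigr (fun _ => 1)); last by move=> r _; rewrite big1 // => y; case: (E y).
rewrite (eq_bigl predT); last first.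
  move=> r; apply/forallP => x; apply/forallP => y; apply/implyP.
  by rewrite (ord1 x) (ord1 y) /= /simplify eqxx.
rewrite sumr_const card_ffun.
by rewrite (@eq_card0 _ {: {x : vtx K1 | x != Defs.root K1}}) // => y; case: (E y).
Qed.

Definition Acol (G : rooted_graph) (c : 'I_n) : R :=
  \sum_(k : {ffun vtx G -> 'I_n} | proper_col k && (k (Defs.root G) == c)) \prod_x X (k x).

Lemma group_root (G : rooted_graph) (phi : 'I_n -> R) :
  \sum_(k : {ffun vtx G -> 'I_n} | proper_col k) (\prod_x X (k x)) * phi (k (Defs.root G))
  = \sum_c Acol G c * phi c.
Proof.
rewrite (partition_big (fun k : {ffun vtx G -> 'I_n} => k (Defs.root G)) predT) //=.
apply: eq_bigr => c _; rewrite /Acol big_distrl; apply: eq_bigr => k /andP[_ /eqP ->] //.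
Qed.

Lemma Acol_B (H : rooted_graph) c : Acol H c = X c * Bsum X H c.
Proof.
pose h := fun r : {ffun {x : vtx H | x != Defs.root H} -> 'I_n} => [ffun x => ext r c x].
pose h' := fun k : {ffun vtx H -> 'I_n} => [ffun y : {x : vtx H | x != Defs.root H} => k (val y)].
have hroot r : h r (Defs.root H) = c by rewrite ffunE /ext insubN ?negbK.
rewrite /Acol (reindex_onto h h'); last first.
  move=> k /andP[_ /eqP kc]; apply/ffunP => x; rewrite !ffunE /ext.
  by case: insubP => [y _ <-| /negPn/eqP ->]; rewrite ?ffunE.
rewrite /Bsum big_distrr; apply: eq_big => r.
  rewrite hroot eqxx andbT.
  have -> : h' (h r) == r by apply/eqP/ffunP => y; rewrite !ffunE /ext valK.
  rewrite andbT /proper_col /properf; apply: eq_forallb => x; apply: eq_forallb => y.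
  by rewrite !ffunE.
move=> _; rewrite (bigD1 (Defs.root H)) //= hroot; congr (_ * _).
transitivity (\prod_(x in [pred x | x != Defs.root H]) X (h r x)).
  by apply: eq_bigl.
rewrite big_sub; apply: eq_bigr => y _.
by rewrite ffunE /ext valK.
Qed.
End Root.


Section Sym.
Variable R : comNzRingType.
Variable n : nat.
Variable X : 'I_n -> R.

Definition Nm m (c d : 'I_n) : R := Wsum X m (fun e => (e == d)%:R) c.

Lemma W_N m f c : Wsum X m f c = \sum_d Nm m c d * f d.
Proof.
rewrite /Nm /Wsum; under [RHS]eq_bigr do rewrite big_distrl.
rewrite exchange_big; apply: eq_bigr => k _ /=.
rewrite (bigD1 (plast c k)) //= eqxx mulr1 [X in _ + X]big1 ?addr0 // => d.
by rewrite eq_sym => /negbTE ->; rewrite mulr0 mul0r.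
Qed.

Lemma N_S m c d : Nm m.+1 c d = \sum_(e | e != c) X e * Nm m e d.
Proof. exact: W_S. Qed.

Lemma N_0 c d : Nm 0 c d = (c == d)%:R.
Proof. exact: W_0. Qed.

Lemma sum_ind1 (c d : 'I_n) :
  \sum_(e | e != c) X e * (e == d)%:R = (d != c)%:R * X d.
Proof.
case: (eqVneq d c) => [->|ndc].
  by rewrite mul0r big1 // => e /negbTE ne; rewrite ne mulr0.
rewrite (bigD1 d) //= eqxx mulr1 big1 ?addr0 ?mul1r // => e /andP[_ /negbTE ->].
by rewrite mulr0.
Qed.

Lemma sum_ind2 (c d : 'I_n) :
  \sum_(e | e != d) (c == e)%:R * X d = (d != c)%:R * X d.
Proof.
case: (eqVneq d c) => [->|ndc].
  by rewrite mul0r big1 // => e /negbTE ne; rewrite eq_sym ne mul0r.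
rewrite (bigD1 c) 1?eq_sym //= eqxx mul1r big1 ?addr0 ?mul1r // => e /andP[_ ne].
by rewrite eq_sym (negbTE ne) mul0r.
Qed.

Lemma N_back m c d : Nm m.+1 c d = \sum_(e | e != d) Nm m c e * X d.
Proof.
elim: m c => [|m IH] c.
  rewrite N_S; under eq_bigr do rewrite N_0.
  under [RHS]eq_bigr do rewrite N_0.
  by rewrite sum_ind1 sum_ind2.
rewrite N_S; under eq_bigr do rewrite IH big_distrr.
rewrite exchange_big; apply: eq_bigr => f _ /=.
rewrite N_S big_distrl; apply: eq_bigr => e _ /=.
by rewrite mulrA.
Qed.

Lemma N_sym m c d : X c * Nm m c d = X d * Nm m d c.
Proof.
elim: m c d => [|m IH] c d.
  by rewrite !N_0; case: (eqVneq c d) => [->|ne]; rewrite // !mulr0.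
rewrite N_S N_back big_distrr big_distrr; apply: eq_bigr => e _ /=.
by rewrite (IH e d) mulrCA [Nm _ _ _ * _]mulrC.
Qed.

Lemma T_eq (H : rooted_graph) m :
  csum X (tailed H m) = \sum_d X d * Wsum X m (Bsum X H) d.
Proof.
rewrite /tailed decomp group_root.
under eq_bigr do rewrite Acol_B W_N.
under eq_bigr do under eq_bigr do rewrite Bsum_K1 mulr1.
under [RHS]eq_bigr do rewrite W_N.
transitivity (\sum_c \sum_d Bsum X H c * (X c * Nm m c d)).
  apply: eq_bigr => c _; rewrite big_distrr; apply: eq_bigr => d _ /=.
  by rewrite [X c * _]mulrC -mulrA.
rewrite (eq_bigr (fun c => \sum_d Bsum X H c * (X d * Nm m d c))); last first.
  by move=> c _; apply: eq_bigr => d _; rewrite N_sym.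
rewrite exchange_big; apply: eq_bigr => d _ /=.
rewrite big_distrr; apply: eq_bigr => c _ /=.
by rewrite mulrC -mulrA.
Qed.
End Sym.


Section Disj.
Variables (T : finType).
Lemma dU1l d (S B : {set T}) : [disjoint d |: S & B] = (d \notin B) && [disjoint S & B].
Proof. rewrite -disjointU1; apply: eq_disjoint => x; rewrite !inE. by []. Qed.
Lemma dU1r d (S B : {set T}) : [disjoint S & d |: B] = (d \notin S) && [disjoint S & B].
Proof. by rewrite disjoint_sym dU1l disjoint_sym. Qed.
Lemma d0r (S : {set T}) : [disjoint S & set0].
Proof. by rewrite -setI_eq0 setI0. Qed.
Lemma d1r (S : {set T}) c : [disjoint S & [set c]] = (c \notin S).
Proof. by rewrite disjoint_sym disjoints1. Qed.
End Disj.

Section Sets.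
Variable R : comNzRingType.
Variable n : nat.
Variable X : 'I_n -> R.

Definition Eb (j : nat) (B : {set 'I_n}) : R :=
  \sum_(S : {set 'I_n} | (#|S| == j) && [disjoint S & B]) \prod_(i in S) X i.

Lemma Eb0 (B : {set 'I_n}) : Eb 0 B = 1.
Proof.
rewrite /Eb (big_pred1 set0) ?big_set0 // => S.
by rewrite cards_eq0 /=; case: (eqVneq S set0) => [->|//]; rewrite disjoint_sym d0r.
Qed.

Lemma reindexU1 (d : 'I_n) (B : {set 'I_n}) (j : nat) : d \notin B ->
  \sum_(S : {set 'I_n} | (#|S| == j) && [disjoint S & d |: B]) X d * \prod_(i in S) X i
  = \sum_(T : {set 'I_n} | [&& #|T| == j.+1, [disjoint T & B] & d \in T]) \prod_(i in T) X i.
Proof.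
move=> dB.
rewrite [RHS](reindex_onto (fun S => d |: S) (fun T => T :\ d)); last first.
  by move=> T /and3P[_ _ dT]; rewrite setD1K.
apply: eq_big => S.
  case dS: (d \in S).
    rewrite dU1r dS /= andbF.
    apply/esym/negbTE; apply/negP => /andP[_ /eqP E].
    by move: dS; rewrite -E !inE eqxx.
  rewrite dU1r dS setU1K ?dS // eqxx andbT cardsU1 dS dU1l dB setU11 /=.
  by rewrite add1n eqSS andbT.
move=> /andP[_]; rewrite dU1r => /andP[dS _].
by rewrite big_setU1.
Qed.

Lemma dcount (j : nat) (B : {set 'I_n}) :
  \sum_(d | d \notin B) X d * Eb j (d |: B) = j.+1%:R * Eb j.+1 B.
Proof.
under eq_bigr => d dB do rewrite /Eb big_distrr (@reindexU1 d B j dB).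
rewrite (exchange_big_dep (fun T : {set 'I_n} => (#|T| == j.+1) && [disjoint T & B])) /=;
  last by move=> d T _ /and3P[-> -> _].
rewrite /Eb big_distrr; apply: eq_bigr => T /andP[/eqP cT dTB].
transitivity (\sum_(d in T) \prod_(i in T) X i).
  apply: eq_bigl => d; rewrite cT eqxx dTB /=; case dT: (d \in T); rewrite ?andbF ?andbT //.
  by apply/negP => dB; move: dTB; rewrite disjoint_sym => /disjointFr /(_ dB); rewrite dT.
by rewrite sumr_const cT -[LHS]mulr_natl.
Qed.

Lemma Eb_split (j : nat) (c : 'I_n) : Eb j.+1 set0 = Eb j.+1 [set c] + X c * Eb j [set c].
Proof.
have -> : Eb j.+1 set0 = \sum_(S : {set 'I_n} | (#|S| == j.+1) && [disjoint S & set0]) \prod_(i in S) X i by [].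
rewrite (bigID (fun S : {set 'I_n} => c \in S)) /= addrC; congr (_ + _).
  by apply: eq_bigl => S; rewrite d0r d1r andbT.
rewrite /Eb big_distrr -[[set c]]setU0 reindexU1 ?inE //.
by apply: eq_bigl => S; rewrite andbA.
Qed.

End Sets.


Section Kg.
Variable R : comNzRingType.
Variable n : nat.
Variable X : 'I_n -> R.

Definition injb m (k : {ffun 'I_m -> 'I_n}) : bool :=
  [forall x, forall y, (x != y) ==> (k x != k y)].
Definition avoid m (B : {set 'I_n}) (k : {ffun 'I_m -> 'I_n}) : bool :=
  [forall i, k i \notin B].

Lemma injb_cons m t (f : {ffun 'I_m -> 'I_n}) :
  injb (fcons t f) = [forall j, f j != t] && injb f.
Proof.
apply/idP/idP.
  move/forallP => H; apply/andP; split.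
    apply/forallP => j; move: (H (lift ord0 j)) => /forallP/(_ ord0)/implyP.
    by rewrite fcons0 fconsS; apply; apply/negP => /eqP/(congr1 (@nat_of_ord _)); rewrite lift0.
  apply/forallP => x; apply/forallP => y; apply/implyP => nxy.
  move: (H (lift ord0 x)) => /forallP/(_ (lift ord0 y))/implyP.
  by rewrite !fconsS; apply; rewrite (inj_eq (@lift_inj _ ord0)).
move/andP => [/forallP Ht /forallP Hf]; apply/forallP => x; apply/forallP => y.
apply/implyP.
case: (unliftP ord0 x) => [x' ->|->]; case: (unliftP ord0 y) => [y' ->|->] nxy.
- rewrite !fconsS; move: (Hf x') => /forallP/(_ y')/implyP; apply.
  by apply: contraNneq nxy => ->.
- by rewrite fconsS fcons0 Ht.
- by rewrite fconsS fcons0 eq_sym Ht.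
- by move: nxy; rewrite eqxx.
Qed.

Lemma avoid_cons m B t (f : {ffun 'I_m -> 'I_n}) :
  avoid B (fcons t f) = (t \notin B) && avoid B f.
Proof.
apply/idP/idP.
  move/forallP => H; apply/andP; split; first by move: (H ord0); rewrite fcons0.
  by apply/forallP => j; move: (H (lift ord0 j)); rewrite fconsS.
move/andP => [tB /forallP H]; apply/forallP => i.
by case: (unliftP ord0 i) => [i' ->|->]; rewrite ?fconsS ?fcons0.
Qed.

Lemma avoidU1 m B t (f : {ffun 'I_m -> 'I_n}) :
  avoid (t |: B) f = [forall j, f j != t] && avoid B f.
Proof.
apply/idP/idP.
  move/forallP => H; apply/andP; split; apply/forallP => j; move: (H j);
  by rewrite !inE negb_or => /andP[].
move/andP => [/forallP H1 /forallP H2]; apply/forallP => j.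
by rewrite !inE negb_or H1 H2.
Qed.

Definition Fsum m (B : {set 'I_n}) : R :=
  \sum_(k : {ffun 'I_m -> 'I_n} | injb k && avoid B k) \prod_i X (k i).

Lemma Fsum_eq m B : Fsum m B = m`!%:R * Eb X m B.
Proof.
elim: m B => [|m IH] B.
  rewrite /Fsum Eb0 mulr1 (eq_bigl predT); last first.
    by move=> k; apply/andP; split; apply/forallP => -[].
  rewrite (eq_bigr (fun _ => 1)); last by move=> k _; rewrite big_ord0.
  by rewrite sumr_const card_ffun card_ord (card_ord 0).
rewrite /Fsum big_mkcond sum_ffun_cons.
rewrite (eq_bigr (fun t => if t \notin B then X t * Fsum m (t |: B) else 0)); last first.
  move=> t _; rewrite /Fsum.
  under eq_bigr do rewrite injb_cons avoid_cons.
  case: (t \notin B) => /=; last by rewrite big1 // => f _; rewrite andbF.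
  rewrite big_distrr [RHS]big_mkcond; apply: eq_bigr => f _ /=.
  rewrite avoidU1 andbCA andbA.
  case: (_ && _) => //.
  by rewrite big_ord_recl fcons0; congr (_ * _); apply: eq_bigr => i _; rewrite fconsS.
rewrite -big_mkcond /=.
under eq_bigr do rewrite IH mulrCA.
by rewrite -big_distrr /= dcount factS natrM mulrA [_ * m.+1%:R]mulrC.
Qed.

Lemma Acol_K g (hg : (0 < g.+1)%N) c :
  Acol X (complete_rgraph hg) c = X c * (g`!%:R * Eb X g [set c]).
Proof.
rewrite -Fsum_eq /Acol /=.
have -> : Ordinal hg = ord0 by apply/val_inj.
rewrite big_mkcond /= sum_ffun_cons.
rewrite (bigD1 c) //= [X in _ + X]big1 ?addr0; last first.
  by move=> t tc; apply: big1 => f _; rewrite fcons0 (negbTE tc) andbF.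
rewrite /Fsum big_distrr [RHS]big_mkcond; apply: eq_bigr => f _.
rewrite fcons0 eqxx andbT.
have -> : proper_col (fcons c f : {ffun vtx (complete_rgraph hg) -> 'I_n}) = injb (fcons c f).
  rewrite /proper_col /injb; apply: eq_forallb => x; apply: eq_forallb => y.
  by rewrite /= /simplify; case: (x =P y) => // ->.
rewrite injb_cons.
have -> : avoid [set c] f = [forall j, f j != c].
  by apply: eq_forallb => j; rewrite inE.
rewrite andbC; case: (_ && _) => //.
by rewrite big_ord_recl fcons0; congr (_ * _); apply: eq_bigr => i _; rewrite fconsS.
Qed.
End Kg.


Section Main.
Variable R : comNzRingType.
Variable n : nat.
Variable X : 'I_n -> R.
Variable H : rooted_graph.

Let T m := csum X (tailed H m).
Let W k := Wsum X k (Bsum X H).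

Lemma W_rec k c : W k.+1 c = T k - X c * W k c.
Proof.
rewrite /W /T T_eq W_S [X in _ = X - _](bigD1 c) //=.
by rewrite addrC addrK.
Qed.

Lemma L_ind g : forall k,
  \sum_c X c * Eb X g [set c] * W k c =
  \sum_(l < g.+1) (1 - (l : nat)%:R) * Eb X l set0 * T (k + g - l)%N.
Proof.
elim: g => [|g IH] k.
  rewrite big_ord1 /= subr0 mul1r Eb0 mul1r addn0 subn0 /T T_eq.
  by apply: eq_bigr => c _; rewrite Eb0 mulr1.
rewrite big_ord_recr /= addnK.
have -> : \sum_(i < g.+1) (1 - (i : nat)%:R) * Eb X i set0 * T (k + g.+1 - i)%N
        = \sum_(i < g.+1) (1 - (i : nat)%:R) * Eb X i set0 * T (k.+1 + g - i)%N.
  by apply: eq_bigr => i _; rewrite addnS addSn.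
rewrite -IH.
have E1 c : Eb X g.+1 [set c] = Eb X g.+1 set0 - X c * Eb X g [set c].
  by rewrite (Eb_split X g c) addrK.
under eq_bigr do rewrite E1.
have Hd : \sum_(d | d \notin set0) X d * Eb X g [set d] = g.+1%:R * Eb X g.+1 set0.
  by rewrite -(dcount X g set0); apply: eq_bigr => d _; rewrite setU0.
set e := Eb X g.+1 set0.
set S1 := \sum_c X c * Eb X g [set c] * W k.+1 c.
have -> : \sum_c X c * (e - X c * Eb X g [set c]) * W k c =
   e * \sum_c X c * W k c - \sum_c X c * Eb X g [set c] * (X c * W k c).
  rewrite big_distrr -sumrB; apply: eq_bigr => c _ /=.
  rewrite mulrBr mulrBl; congr (_ - _); first by rewrite mulrA [e * _]mulrC.
  by rewrite !mulrA [X c * Eb X g _ * X c]mulrAC.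
have -> : \sum_c X c * Eb X g [set c] * (X c * W k c) =
   T k * \sum_c X c * Eb X g [set c] - S1.
  rewrite /S1 mulr_sumr -sumrB; apply: eq_bigr => c _.
  rewrite W_rec; ring.
rewrite -T_eq -/(T k).
have -> : \sum_c X c * Eb X g [set c] = g.+1%:R * e.
  rewrite -Hd [RHS](bigID (fun d => d \notin set0)) /=.
  rewrite [X in _ + X]big1 ?addr0 //; last by move=> d; rewrite inE.
  by apply: eq_bigl => d; rewrite inE.
rewrite -[(g.+1)%:R]natr1.
ring.
Qed.
End Main.


Lemma main_generic (R : comNzRingType) (n : nat) (X : 'I_n -> R) (H : rooted_graph)
   (k g : nat) (hg : (0 < g.+1)%N) :
  csum X (path_join (complete_rgraph hg) H k) =
  g`!%:R * \sum_(l < g.+1) (1 - (l : nat)%:R) * Eb X l set0 * csum X (tailed H (k + g - l)%N).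
Proof.
rewrite decomp group_root -L_ind mulr_sumr; apply: eq_bigr => c _.
by rewrite Acol_K; rewrite !mulrA [X c * _]mulrC.
Qed.

Unset Implicit Arguments.

Theorem proposition3p1 (H : rooted_graph) (k g : nat) (hg : (0 < g)%N) (n : nat) :
  chromsym n (path_join (complete_rgraph hg) H k) =
  (g.-1)`!%:R *
    \sum_(l < g) ((1 - (l : nat)%:R) * mesym n int l
                   * chromsym n (tailed H (k + g - 1 - l)%N)).
Proof.
case: g hg => [//|g] hg.
transitivity (csum (fun i : 'I_n => 'X_i : {mpoly int[n]}) (path_join (complete_rgraph hg) H k)).
  by [].
rewrite main_generic /=; congr (_ * _); apply: eq_bigr => l _.
have -> : mesym n int l = Eb (fun i : 'I_n => 'X_i : {mpoly int[n]}) l set0.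
  by apply: eq_bigl => S; rewrite d0r andbT.
by rewrite addnS subSS subn0.
Qed.
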